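(* $c_2=1$, $c_3=c_4=\frac12$, $c_5=c_6=\frac25$, $c_7=\frac38$ and $c_8=\frac4{11}$.
   Context: A weighted digraph $D=(V,A,w)$ is a digraph without loops or parallel arcs (opposite arcs allowed) with weights $w:A\to\mathbb{R}_{\ge0}$; $w(D)$ is the total arc weight. For a partition $(X,Y)$ of $V$, $w(X,Y)$ is the total weight of arcs from $X$ to $Y$, and $\mathrm{mac}(D)=\max_{(X,Y)}w(X,Y)$. For an integer $\nu\ge1$, $c_\nu$ is the supremum of reals $c\ge0$ such that every acyclic weighted digraph $D$ whose longest directed path has exactly $\nu$ vertices satisfies $\mathrm{mac}(D)\ge c\cdot w(D)$. *)

(* Defs.v *)
From HB Require Import structures.
From mathcomp Require Import all_boot all_order all_algebra.
From mathcomp Require Import reals.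
Set Implicit Arguments. Unset Strict Implicit. Unset Printing Implicit Defensive.
Import Order.TTheory GRing.Theory Num.Theory.
Local Open Scope ring_scope.

(* A weighted digraph on vertex set 'I_n: arc relation A (no loops; a relation,
   so no parallel arcs; opposite arcs allowed) and weights w, nonnegative on arcs.
   Only the values of w on arcs matter. *)
Definition loopless (n : nat) (A : rel 'I_n) : Prop := forall i, ~~ A i i.

Definition nonneg_weights (R : realType) (n : nat) (A : rel 'I_n)
  (w : 'I_n -> 'I_n -> R) : Prop := forall i j, A i j -> 0 <= w i j.

Definition acyclic (n : nat) (A : rel 'I_n) : Prop :=
  forall (x : 'I_n) (p : seq 'I_n), path A x p -> p != [::] -> last x p != x.

(* directed path x :: p (no repeated vertices); it has (size p).+1 vertices *)
Definition dipath (n : nat) (A : rel 'I_n) (x : 'I_n) (p : seq 'I_n) : bool :=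
  path A x p && uniq (x :: p).

Definition longest_path_vertices (n : nat) (A : rel 'I_n) (nu : nat) : Prop :=
  (exists (x : 'I_n) (p : seq 'I_n), dipath A x p /\ size (x :: p) = nu) /\
  (forall (x : 'I_n) (p : seq 'I_n), dipath A x p -> (size (x :: p) <= nu)%N).

Definition wtot (R : realType) (n : nat) (A : rel 'I_n) (w : 'I_n -> 'I_n -> R) : R :=
  \sum_(i : 'I_n) \sum_(j : 'I_n | A i j) w i j.

Definition wcut (R : realType) (n : nat) (A : rel 'I_n) (w : 'I_n -> 'I_n -> R)
  (X : {set 'I_n}) : R :=
  \sum_(i in X) \sum_(j in ~: X | A i j) w i j.

(* mac(D) = max over partitions (X, V \ X) of w(X, V \ X) (all cuts are >= 0) *)
Definition mac (R : realType) (n : nat) (A : rel 'I_n) (w : 'I_n -> 'I_n -> R) : R :=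
  \big[Num.max/0]_(X : {set 'I_n}) wcut A w X.

Definition good_constants (R : realType) (nu : nat) : R -> Prop :=
  fun c => 0 <= c /\
    forall (n : nat) (A : rel 'I_n) (w : 'I_n -> 'I_n -> R),
      loopless A -> nonneg_weights A w -> acyclic A ->
      longest_path_vertices A nu ->
      c * wtot A w <= mac A w.

Definition is_sup (R : realType) (S : R -> Prop) (v : R) : Prop :=
  (forall c, S c -> c <= v) /\ (forall b, (forall c, S c -> c <= b) -> v <= b).

Definition c_nu_is (R : realType) (nu : nat) (v : R) : Prop :=
  is_sup (good_constants (R:=R) nu) v.

(* Main.v *)
Require Import Defs.
From HB Require Import structures.
From mathcomp Require Import all_boot all_order all_algebra.
From mathcomp Require Import reals.
From mathcomp Require Import ring lra.
Import Order.TTheory GRing.Theory Num.Theory.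
Local Open Scope ring_scope.
Set Implicit Arguments. Unset Strict Implicit. Unset Printing Implicit Defensive.
Section Levels.
Variables (n : nat) (A : rel 'I_n).

Lemma path_uniq_acyc (x : 'I_n) (p : seq 'I_n) :
  acyclic A -> path A x p -> uniq (x :: p).
Proof.
move=> hac; elim: p x => [|y q IH] x //= /andP[Axy pq].
have := IH y pq => /= -> ; rewrite andbT.
apply/negP => xin.
have hp0 : path A x (y :: q) by rewrite /= Axy.
have xin' : x \in y :: q by [].
case/splitPr: xin' hp0 => p1 p2.
rewrite cat_path /= => /and3P[h1 h2 _].
have hp : path A x (rcons p1 x) by rewrite rcons_path h1.
move: (hac x (rcons p1 x) hp); rewrite last_rcons eqxx.
by case: p1 {h1 h2 hp} => [|? ?] /(_ isT).
Qed.

Definition step (g : 'I_n -> nat) (v : 'I_n) : nat := (\max_(u | A u v) (g u).+1)%N.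
Definition lev k := iter k step (fun _ => 0%N).

Lemma lev_walk k v : exists x p, [/\ path A x p, last x p = v & size p = lev k v].
Proof.
elim: k v => [|k IH] v; first by exists v, [::].
rewrite /lev iterS -/(lev k) /step.
case: (pickP (fun u => A u v)) => [u Auv|h0].
  have hc : (0 < #|(fun u => A u v)|)%N by apply/card_gt0P; exists u.
  have [u0 hu0 ->] := @eq_bigmax_cond _ (fun u => A u v) (fun u => (lev k u).+1) hc.
  have [x [p [hp hl hs]]] := IH u0.
  exists x, (rcons p v); split.
  - by rewrite rcons_path hp hl.
  - by rewrite last_rcons.
  - by rewrite size_rcons hs.
rewrite big_pred0 //; by exists v, [::].
Qed.

Lemma step_mono (g h : 'I_n -> nat) : (forall v, g v <= h v)%N -> forall v, (step g v <= step h v)%N.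
Proof.
move=> gh v; apply/bigmax_leqP => u Auv.
by apply: leq_trans (leq_bigmax_cond _ Auv); rewrite ltnS.
Qed.

Lemma lev_mono k v : (lev k v <= lev k.+1 v)%N.
Proof.
elim: k v => [|k IH] v //.
by rewrite /lev !iterS; apply: step_mono.
Qed.

Variable nu : nat.
Hypothesis hac : acyclic A.
Hypothesis hlong : forall x p, dipath A x p -> (size (x :: p) <= nu)%N.

Lemma lev_lt k v : (lev k v < nu)%N.
Proof.
have [x [p [hp hl hs]]] := lev_walk k v.
have := hlong (x:=x) (p:=p); rewrite /dipath hp path_uniq_acyc //= => /(_ isT).
by rewrite hs.
Qed.

Definition S k := (\sum_v lev k v)%N.

Lemma S_bound k : (S k <= n * nu)%N.
Proof.
rewrite /S; apply: leq_trans (_ : \sum_(v : 'I_n) nu <= _)%N.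
  by apply: leq_sum => v _; apply: ltnW; apply: lev_lt.
by rewrite sum_nat_const card_ord.
Qed.

Lemma stab_or k : (exists j, forall v, lev j.+1 v = lev j v) \/ (k <= S k)%N.
Proof.
elim: k => [|k [IH|IH]]; [by right| by left|].
case: (boolP [forall v, lev k.+1 v == lev k v]) => [/forallP h|].
  by left; exists k => v; apply/eqP.
rewrite negb_forall => /existsP[v hv]; right.
have lt : (lev k v < lev k.+1 v)%N by rewrite ltn_neqAle eq_sym hv lev_mono.
apply: leq_ltn_trans IH _.
rewrite /S (bigD1 v) //= [X in (_ < X)%N](bigD1 v) //=.
apply: leq_trans (_ : lev k v + \sum_(i | i != v) lev k.+1 i < _)%N.
  by rewrite ltnS leq_add2l leq_sum // => i _; apply: lev_mono.
by rewrite ltn_add2r.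
Qed.

Lemma level_fun : exists f : 'I_n -> nat,
  (forall v, f v < nu)%N /\ (forall u v, A u v -> f u < f v)%N.
Proof.
case: (stab_or (n * nu).+1) => [[j hj]|]; last by rewrite ltnNge S_bound.
exists (lev j); split => [v|u v Auv]; first exact: lev_lt.
rewrite -(hj v) /lev iterS -/(lev j) /step.
exact: (leq_bigmax_cond (F := fun u => (lev j u).+1) _ Auv).
Qed.
End Levels.
Lemma wcutE (R : realType) n (A : rel 'I_n) (w : 'I_n -> 'I_n -> R) X :
  wcut A w X = \sum_i \sum_(j | A i j) w i j * ((i \in X) && (j \notin X))%:R.
Proof.
rewrite /wcut big_mkcond; apply: eq_bigr => i _.
case: (boolP (i \in X)) => iX /=.
  rewrite big_mkcond [RHS]big_mkcond; apply: eq_bigr => j _.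
  by rewrite in_setC; case: (j \in X); case: (A i j) => /=; rewrite ?mulr1 ?mulr0.
by rewrite big1 // => j _; rewrite mulr0.
Qed.

Lemma le_mac (R : realType) n (A : rel 'I_n) (w : 'I_n -> 'I_n -> R) X :
  wcut A w X <= mac A w.
Proof. by rewrite /mac (bigD1 X) //= le_max lexx. Qed.

Definition coef (dist : seq (seq nat * nat)) (a b : nat) : nat :=
  sumn [seq (d.2 * ((a \in d.1) && (b \notin d.1)))%N | d <- dist].

Definition lowcheck nu dist k := all (fun a => all (fun b => (a < b) ==> (k <= coef dist a b))%N
   (iota 0 nu)) (iota 0 nu).

Lemma lower (R : realType) nu dist k m (c : R) : lowcheck nu dist k ->
  sumn (map snd dist) = m -> (0 < m)%N -> 0 <= c -> c * m%:R <= k%:R ->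
  good_constants nu c.
Proof.
move=> hchk hm m0 c0 hc; split => // n A w _ hw hac [_ hlong].
have [f [fb fA]] := level_fun hac hlong.
set X := fun d : seq nat * nat => [set v | f v \in d.1].
have key : forall dist',
  \sum_(d <- dist') d.2%:R * wcut A w (X d) =
  \sum_i \sum_(j | A i j) w i j * (coef dist' (f i) (f j))%:R.
  elim => [|d ds IH].
    by rewrite big_nil; symmetry; apply: big1 => i _; apply: big1 => j _; rewrite mulr0.
  rewrite big_cons IH wcutE mulr_sumr -big_split /=; apply: eq_bigr => i _.
  rewrite mulr_sumr -big_split /=; apply: eq_bigr => j _.
  rewrite /coef /= natrD mulrDr natrM mulrCA !inE; congr (_ + _).
have h1 : k%:R * wtot A w <= \sum_(d <- dist) d.2%:R * wcut A w (X d).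
  rewrite key /wtot mulr_sumr; apply: ler_sum => i _.
  rewrite mulr_sumr; apply: ler_sum => j Aij.
  rewrite mulrC; apply: ler_wpM2l; first exact: hw.
  rewrite ler_nat.
  have fij := fA _ _ Aij.
  have fjb := fb j.
  have fib := ltn_trans fij fjb.
  move/allP: hchk => /(_ (f i)); rewrite mem_iota add0n fib => /(_ isT) /allP.
  by move=> /(_ (f j)); rewrite mem_iota add0n fjb fij => /(_ isT).
have h2 : \sum_(d <- dist) d.2%:R * wcut A w (X d) <= m%:R * mac A w.
  rewrite -hm; elim: (dist) => [|d ds IH]; first by rewrite big_nil mul0r.
  rewrite big_cons /= natrD mulrDl; apply: lerD => //.
  by apply: ler_wpM2l => //; apply: le_mac.
have wt0 : 0 <= wtot A w.
  by apply: sumr_ge0 => i _; apply: sumr_ge0 => j; apply: hw.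
have mac0 : 0 <= mac A w by apply: le_trans (le_mac A w set0); rewrite wcutE;
  apply: sumr_ge0 => i _; apply: sumr_ge0 => j Aij; apply: mulr_ge0 => //; apply: hw.
have hm0 : 0 < (m%:R : R) by rewrite ltr0n.
have : c * wtot A w * m%:R <= m%:R * mac A w.
  apply: le_trans (le_trans h1 h2).
  by rewrite mulrAC; apply: ler_wpM2r.
rewrite mulrC mulrA => hh.
by rewrite -(ler_pM2l hm0) mulrA.
Qed.
Fixpoint allbl (k : nat) : seq (seq bool) :=
  if k is k'.+1 then [seq x :: b | x <- [:: true; false], b <- allbl k'] else [:: [::]].

Lemma allblP k b : size b = k -> b \in allbl k.
Proof.
elim: k b => [|k IH] [|x b] //= [hs].
have hb := IH _ hs; by case: x; rewrite /= !mem_cat (map_f _ hb) ?orbT.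
Qed.

Definition sum2 nu (G : nat -> nat -> nat) : nat :=
  sumn [seq sumn [seq G i j | j <- iota 0 nu] | i <- iota 0 nu].

Lemma sum_ordE nu (F : nat -> nat) : (\sum_(i < nu) F i)%N = sumn [seq F i | i <- iota 0 nu].
Proof. by rewrite sumnE big_map -(big_mkord xpredT) /index_iota subn0. Qed.

Lemma sum2E (R : realType) nu (G : nat -> nat -> nat) :
  \sum_(i < nu) \sum_(j < nu) (G i j)%:R = (sum2 nu G)%:R :> R.
Proof.
rewrite /sum2 -sum_ordE natr_sum; apply: eq_bigr => i _.
by rewrite -sum_ordE natr_sum.
Qed.

Definition cutL nu (W : nat -> nat -> nat) (b : seq bool) :=
  sum2 nu (fun i j => W i j * (i < j) * (nth false b i && ~~ nth false b j))%N.
Definition totL nu (W : nat -> nat -> nat) := sum2 nu (fun i j => W i j * (i < j))%N.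

Definition upcheck nu W num den :=
  all (fun b => den * cutL nu W b <= num * totL nu W)%N (allbl nu) && (0 < totL nu W)%N.

Definition AT nu : rel 'I_nu := fun i j => (i < j)%N.

Lemma AT_acyc nu : acyclic (@AT nu).
Proof.
move=> x p hp pn.
have tr : transitive (@AT nu) by move=> a b d; apply: ltn_trans.
move: hp; rewrite (path_sortedE tr) => /andP[/allP hx _].
have : last x p \in p by case: p pn {hx} => [|y q] //= _; apply: mem_last.
move=> /hx; rewrite /AT => h; apply/eqP => e; by move: h; rewrite e ltnn.
Qed.

Lemma AT_path n' : dipath (@AT n'.+1) (inord 0) (map inord (iota 1 n')).
Proof.
have hp : forall r m, (m + r <= n')%N -> path (@AT n'.+1) (inord m) (map inord (iota m.+1 r)).
  elim => [|r IH] m hmr //=.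
  rewrite IH ?addSnnS // andbT /AT !inordK //; first by rewrite ltnS; apply: leq_trans hmr; rewrite -addSnnS leq_addr.
  by rewrite ltnS; apply: leq_trans hmr; rewrite leq_addr.
have h := hp n' 0%N (leqnn _).
by rewrite /dipath h (path_uniq_acyc (@AT_acyc n'.+1) h).
Qed.
Lemma upper (R : realType) nu' W num den (c : R) : upcheck nu'.+1 W num den ->
  good_constants nu'.+1 c -> c * den%:R <= num%:R.
Proof.
case/andP => /allP hall htot [c0 hgood].
have hpath := AT_path nu'.
have hacyc := @AT_acyc nu'.+1.
pose w := fun i j : 'I_(nu'.+1) => (W i j)%:R : R.
have hwt : wtot (@AT nu'.+1) w = (totL nu'.+1 W)%:R.
  rewrite /totL -sum2E; apply: eq_bigr => i _; rewrite big_mkcond; apply: eq_bigr => j _.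
  by rewrite /AT /w; case: (i < j)%N; rewrite ?muln1 ?muln0.
have hcut : forall X, (den%:R * wcut (@AT nu'.+1) w X <= num%:R * wtot (@AT nu'.+1) w :> R).
  move=> X; pose b := [seq x \in X | x <- enum 'I_(nu'.+1)].
  have hb : forall i : 'I_(nu'.+1), nth false b i = (i \in X).
    move=> i; rewrite /b (nth_map i) ?size_enum_ord ?ltn_ord //.
    by rewrite nth_ord_enum.
  have : wcut (@AT nu'.+1) w X = (cutL nu'.+1 W b)%:R.
    rewrite wcutE /cutL -sum2E; apply: eq_bigr => i _; rewrite big_mkcond; apply: eq_bigr => j _.
    rewrite /AT /w !hb; case: (i < j)%N; rewrite ?muln1 ?muln0 ?mul0n ?natrM ?mul0r //.
  move=> ->; rewrite hwt -!natrM ler_nat; apply: hall; apply: allblP.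
  by rewrite size_map size_enum_ord.
have hmac : den%:R * mac (@AT nu'.+1) w <= num%:R * wtot (@AT nu'.+1) w.
  rewrite /mac; elim/big_ind: _ => //.
  - by rewrite mulr0 hwt -natrM ler0n.
  - move=> x y hx hy. case: (leP x y) => _ //.
have hT : longest_path_vertices (@AT nu'.+1) nu'.+1.
  split.
    exists (inord 0), (map inord (iota 1 nu')); split => //.
    by rewrite /= size_map size_iota.
  move=> x p /andP[_ /card_uniqP <-]; rewrite -[X in (_ <= X)%N](card_ord nu'.+1); exact: max_card.
have hl : loopless (@AT nu'.+1) by move=> i; rewrite /AT ltnn.
have := hgood nu'.+1 (@AT nu'.+1) w hl (fun i j _ => ler0n _ _) hacyc hT.
rewrite hwt => h.
have t0 : 0 < (totL nu'.+1 W)%:R :> R by rewrite ltr0n.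
rewrite -(ler_pM2r t0) -mulrA [den%:R * _]mulrC mulrA.
apply: le_trans (_ : mac (@AT nu'.+1) w * den%:R <= _).
  by apply: ler_wpM2r => //; rewrite ler0n.
by rewrite mulrC -hwt.
Qed.
Definition Wf (l : seq (nat * nat * nat)) (i j : nat) : nat :=
  sumn [seq t.2 | t <- l & t.1 == (i, j)].

Lemma cnu (R : realType) nu' dist k m l num den (v : R) :
  lowcheck nu'.+1 dist k -> sumn (map snd dist) = m -> (0 < m)%N -> 0 <= v ->
  v * m%:R <= k%:R ->
  upcheck nu'.+1 (Wf l) num den ->
  (0 < den)%N -> v * den%:R = num%:R ->
  c_nu_is nu'.+1 v.
Proof.
move=> hl hm m0 v0 hv hu d0 hvd.
have hg : good_constants nu'.+1 v by apply: (lower hl hm).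
have up : forall c, good_constants nu'.+1 c -> c <= v.
  move=> c hc; have := upper hu hc; rewrite -hvd.
  by rewrite ler_pM2r // ltr0n.
split => // b hb; exact: hb.
Qed.

Theorem theoremA (R : realType) :
  c_nu_is (R:=R) 2 1 /\
  c_nu_is (R:=R) 3 (1/2) /\ c_nu_is (R:=R) 4 (1/2) /\
  c_nu_is (R:=R) 5 (2/5) /\ c_nu_is (R:=R) 6 (2/5) /\
  c_nu_is (R:=R) 7 (3/8) /\ c_nu_is (R:=R) 8 (4/11).
Proof.
split.
  apply: (@cnu R 1 [:: ([:: 0%N], 1%N)] 1 1 [:: (0, 1, 1)]%N 1 1);
    match goal with |- context [R] => lra | _ => vm_compute; reflexivity end.
split.
  apply: (@cnu R 2 [:: ([:: 0%N], 1%N); ([:: 1%N], 1%N)] 1 2 [:: (0, 1, 1); (1, 2, 1)]%N 1 2);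
    match goal with |- context [R] => lra | _ => vm_compute; reflexivity end.
split.
  apply: (@cnu R 3 [:: ([:: 0; 1], 1); ([:: 0; 2], 1)]%N 1 2 [:: (1, 2, 1); (2, 3, 1)]%N 1 2);
    match goal with |- context [R] => lra | _ => vm_compute; reflexivity end.
split.
  apply: (@cnu R 4 [:: ([:: 0; 1], 1); ([:: 0; 2], 1); ([:: 0; 3], 1); ([:: 1; 2], 1); ([:: 1; 3], 1)]%N 2 5
     [:: (0, 1, 1); (1, 2, 1); (1, 3, 1); (2, 3, 1); (3, 4, 1)]%N 2 5);
    match goal with |- context [R] => lra | _ => vm_compute; reflexivity end.
split.
  apply: (@cnu R 5 [:: ([:: 1; 2], 1); ([:: 0; 1; 3], 1); ([:: 0; 1; 4], 1); ([:: 0; 2; 3], 1); ([:: 0; 2; 4], 1)]%N 2 5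
     [:: (1, 2, 1); (2, 3, 1); (2, 4, 1); (3, 4, 1); (4, 5, 1)]%N 2 5);
    match goal with |- context [R] => lra | _ => vm_compute; reflexivity end.
split.
  apply: (@cnu R 6 [:: ([:: 0; 1; 3], 1); ([:: 0; 1; 4], 1); ([:: 0; 2; 3], 1); ([:: 0; 2; 5], 1);
       ([:: 1; 2; 4], 1); ([:: 0; 1; 2; 5], 1); ([:: 0; 1; 3; 5], 1); ([:: 0; 2; 3; 4], 1)]%N 3 8
     [:: (0, 1, 2); (0, 2, 1); (1, 2, 1); (1, 3, 1); (1, 4, 1); (1, 5, 1); (2, 3, 1); (2, 4, 1);
         (2, 5, 1); (3, 4, 1); (3, 5, 1); (4, 5, 2); (5, 6, 2)]%N 3 8);
    match goal with |- context [R] => lra | _ => vm_compute; reflexivity end.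
apply: (@cnu R 7 [:: ([:: 0; 2; 4], 2); ([:: 0; 3; 4], 1); ([:: 1; 2; 5], 2); ([:: 1; 3; 5], 1);
     ([:: 0; 1; 2; 6], 2); ([:: 0; 1; 3; 4], 2); ([:: 0; 1; 3; 5], 1); ([:: 0; 1; 3; 6], 2);
     ([:: 0; 1; 4; 5], 1); ([:: 0; 1; 4; 6], 1); ([:: 0; 2; 3; 4], 1); ([:: 0; 2; 3; 5], 2);
     ([:: 0; 2; 3; 6], 2); ([:: 0; 1; 2; 4; 5], 1); ([:: 0; 1; 2; 4; 6], 1)]%N 8 22
   [:: (0, 1, 2); (1, 2, 2); (1, 3, 2); (1, 4, 2); (2, 3, 2); (2, 4, 2); (3, 4, 3); (3, 5, 1);
       (3, 6, 1); (4, 5, 4); (4, 6, 4); (5, 6, 4); (6, 7, 4)]%N 4 11);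
  match goal with |- context [R] => lra | _ => vm_compute; reflexivity end.
Qed.
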